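(* Let $M_1 \in \mathbb{Z}^{m\times m}$ be nonsingular, $M_2 \in \mathbb{Z}^{\ell_2 \times m}$, $F \in \mathbb{Z}^{n\times m}$, and let $(S,W)$ be a Smith massager for $M_1$. Then $$\mathcal{R}\left(\begin{bmatrix} M_1 \\ M_2 \end{bmatrix}, F\right) = \mathcal{R}\left(\begin{bmatrix} S \\ \mathrm{colmod}(M_2W,S)\end{bmatrix}, \mathrm{colmod}(FW,S)\right).$$
   Context: For an integer matrix $A$, $\mathcal{L}(A)$ denotes the lattice of all $\mathbb{Z}$-linear combinations of the rows of $A$. For $M \in \mathbb{Z}^{\ell \times m}$ of full column rank and $F \in \mathbb{Z}^{n \times m}$, the integer relations lattice is $\mathcal{R}(M,F) := \{p \in \mathbb{Z}^{1\times n} : pF \in \mathcal{L}(M)\}$. For a diagonal $S \in \mathbb{Z}_{\ge 0}^{m\times m}$ with positive diagonal and $A$ with $m$ columns, $\mathrm{colmod}(A,S)$ is the matrix obtained from $A$ by replacing each entry in column $j$ by its residue in $\{0,\dots,S_{jj}-1\}$ modulo $S_{jj}$. ''$A \equiv B \bmod S$'' means every row of $A-B$ lies in $\mathcal{L}(S)$. A Smith form is a diagonal matrix $\mathrm{diag}(s_1,\dots,s_m)$ with nonnegative integer entries and $s_i \mid s_{i+1}$; the Smith form of a nonsingular $M$ is the unique such matrix $UMV$ with $U,V$ unimodular. If $M \in \mathbb{Z}^{m\times m}$ is nonsingular with Smith form $S$, a pair $(S,W)$ with $W \in \mathbb{Z}^{m\times m}$ is a Smith massager for $M$ if (i) $MW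 \equiv 0 \bmod S$ and (ii) there exists $Z \in \mathbb{Z}^{m\times m}$ with $ZW \equiv I_m \bmod S$. *)

(* Defs.v *)
From HB Require Import structures.
From mathcomp Require Import all_boot all_order all_algebra.
Set Implicit Arguments. Unset Strict Implicit. Unset Printing Implicit Defensive.
Import Order.TTheory GRing.Theory Num.Theory.
Local Open Scope ring_scope.

Definition in_lattice (l m : nat) (A : 'M[int]_(l, m)) (v : 'rV[int]_m) : Prop :=
  exists x : 'rV[int]_l, v = x *m A.

Definition in_relations (l m n : nat) (M : 'M[int]_(l, m)) (F : 'M[int]_(n, m))
  (p : 'rV[int]_n) : Prop := in_lattice M (p *m F).

Definition colmod (k m : nat) (A : 'M[int]_(k, m)) (S : 'M[int]_m) : 'M[int]_(k, m) :=
  \matrix_(i < k, j < m) ((A i j) %% (S j j))%Z.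

Definition congr_mod (k m : nat) (A B : 'M[int]_(k, m)) (S : 'M[int]_m) : Prop :=
  forall i : 'I_k, in_lattice S (row i (A - B)).

Definition is_smith_diag (m : nat) (S : 'M[int]_m) : Prop :=
  (forall i j : 'I_m, i != j -> S i j = 0) /\
  (forall i : 'I_m, 0 <= S i i) /\
  (forall i j : 'I_m, (i <= j)%N -> (S i i %| S j j)%Z).

Definition smith_form_of (m : nat) (M S : 'M[int]_m) : Prop :=
  is_smith_diag S /\
  exists U V : 'M[int]_m, U \in unitmx /\ V \in unitmx /\ S = U *m M *m V.

Definition smith_massager (m : nat) (M S W : 'M[int]_m) : Prop :=
  smith_form_of M S /\
  congr_mod (M *m W) 0 S /\
  exists Z : 'M[int]_m, congr_mod (Z *m W) 1%:M S.

(* Main.v *)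
Require Import Defs.
From HB Require Import structures.
From mathcomp Require Import all_boot all_order all_algebra zify.
Set Implicit Arguments. Unset Strict Implicit. Unset Printing Implicit Defensive.
Import Order.TTheory GRing.Theory Num.Theory.
Local Open Scope ring_scope.

Definition isdiag m (S : 'M[int]_m) := forall i j : 'I_m, i != j -> S i j = 0.

Lemma mul_diagE k m (S : 'M[int]_m) (X : 'M[int]_(k, m)) i j :
  isdiag S -> (X *m S) i j = X i j * S j j.
Proof.
move=> dS; rewrite !mxE (bigD1 j) //= big1 ?addr0 // => l /negbTE lj.
by rewrite dS ?mulr0 // lj.
Qed.

Lemma lat0 l m (S : 'M[int]_(l, m)) : in_lattice S 0.
Proof. by exists 0; rewrite mul0mx. Qed.

Lemma latD l m (S : 'M[int]_(l, m)) u v :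
  in_lattice S u -> in_lattice S v -> in_lattice S (u + v).
Proof. by move=> [x ->] [y ->]; exists (x + y); rewrite mulmxDl. Qed.

Lemma latN l m (S : 'M[int]_(l, m)) u : in_lattice S u -> in_lattice S (- u).
Proof. by move=> [x ->]; exists (- x); rewrite mulNmx. Qed.

Lemma latM l m k (S : 'M[int]_(l, m)) (a : 'rV[int]_k) (A : 'M[int]_(k, m)) :
  (forall i, in_lattice S (row i A)) -> in_lattice S (a *m A).
Proof.
move=> H; have [X HX] := fin_all_exists H.
exists (a *m \matrix_i X i); rewrite -mulmxA; congr (_ *m _).
by apply/row_matrixP => i; rewrite row_mul rowK -HX.
Qed.

Lemma latMx l m k (S : 'M[int]_(l, m)) (A : 'M[int]_(k, m)) :
  (forall i, in_lattice S (row i A)) -> exists X, A = X *m S.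
Proof.
move=> H; have [X HX] := fin_all_exists H.
exists (\matrix_i X i).
by apply/row_matrixP => i; rewrite row_mul rowK -HX.
Qed.

Definition red m (S : 'M[int]_m) (u : 'rV[int]_m) : 'rV[int]_m :=
  \row_j ((u ord0 j) %% (S j j))%Z.

Lemma red_lat m (S : 'M[int]_m) u v : isdiag S ->
  in_lattice S v -> red S (u + v) = red S u.
Proof.
move=> dS [x ->]; apply/rowP => j; rewrite !mxE.
have := mul_diagE x ord0 j dS; rewrite mxE => ->.
by rewrite addrC modzMDl.
Qed.

Lemma red_sub m (S : 'M[int]_m) u : isdiag S -> in_lattice S (u - red S u).
Proof.
move=> dS; exists (\row_j ((u ord0 j) %/ (S j j))%Z); apply/rowP => j.
rewrite mul_diagE // !mxE.
by rewrite {1}(divz_eq (u ord0 j) (S j j)) addrK.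
Qed.

Lemma red_red m (S : 'M[int]_m) u : red S (red S u) = red S u.
Proof. by apply/rowP => j; rewrite !mxE modz_mod. Qed.

Lemma red0 m (S : 'M[int]_m) : red S 0 = 0.
Proof. by apply/rowP => j; rewrite !mxE mod0z. Qed.

Lemma redW m (S W : 'M[int]_m) z : isdiag S ->
  (forall q : 'rV_m, in_lattice S (q *m S *m W)) ->
  red S (red S z *m W) = red S (z *m W).
Proof.
move=> dS hW; have [x Hx] := red_sub z dS.
have -> : red S z = z + (- x) *m S by rewrite mulNmx -Hx opprB addrC subrK.
by rewrite mulmxDl red_lat.
Qed.

Lemma key m (S W : 'M[int]_m) : isdiag S -> (forall j, 0 < S j j) ->
  (forall q : 'rV_m, in_lattice S (q *m S *m W)) ->
  (forall d : 'rV_m, exists z, in_lattice S (z *m W - d)) ->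
  forall u, in_lattice S (u *m W) -> in_lattice S u.
Proof.
move=> dS Spos hW hsurj u hu.
set K := (\max_j absz (S j j))%N.
pose enc (u : 'rV[int]_m) : {ffun 'I_m -> 'I_K.+1} :=
  [ffun j => inord (absz (u ord0 j))].
pose dec (t : {ffun 'I_m -> 'I_K.+1}) : 'rV[int]_m := \row_j ((t j : nat)%:Z).
have encK t : enc (dec t) = t.
  by apply/ffunP => j; rewrite ffunE mxE /= inord_val.
have decE v : dec (enc (red S v)) = red S v.
  apply/rowP => j; rewrite /red !mxE ffunE !mxE.
  have h0 : 0 <= (v ord0 j %% S j j)%Z by rewrite modz_ge0 // gt_eqF.
  have h1 : (v ord0 j %% S j j)%Z < S j j by rewrite ltz_pmod.
  have hK : (absz (S j j) <= K)%N by rewrite /K (bigD1 j) //= leq_maxl.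
  rewrite inordK; first by rewrite abszE ger0_norm.
  have : (absz (v ord0 j %% S j j)%Z < absz (S j j))%N.
    by rewrite -ltz_nat !gez0_abs // ltW.
  lia.
pose g t := enc (red S (dec t *m W)).
pose A := [set t | red S (dec t) == dec t].
have gA v : enc (red S v) \in A by rewrite inE decE red_red.
have sub : A \subset g @: A.
  apply/subsetP => t; rewrite inE => /eqP Ht.
  have [z Hz] := hsurj (dec t).
  apply/imsetP; exists (enc (red S z)); first exact: gA.
  rewrite /g decE redW //.
  have -> : z *m W = dec t + (z *m W - dec t) by rewrite addrC subrK.
  by rewrite red_lat // Ht encK.
have inj : {in A &, injective g}.
  apply/imset_injP; rewrite eqn_leq leq_imset_card subset_leq_card //.
have e : enc (red S u) = enc (red S 0).
  apply: inj; rewrite ?gA // /g !decE !redW // mul0mx.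
  by rewrite -[u *m W]add0r red_lat.
have := congr1 dec e; rewrite !decE red0 => hr.
have := red_sub u dS; by rewrite hr subr0.
Qed.

Lemma key2 m (M1 S W U V X Z R : 'M[int]_m) : isdiag S -> (forall j, 0 < S j j) ->
  V \in unitmx -> S = U *m M1 *m V -> M1 *m W = X *m S ->
  Z *m W - 1%:M = R *m S ->
  forall v, in_lattice S (v *m W) -> in_lattice M1 v.
Proof.
move=> dS Spos hV hS hX hZ v hv.
pose W' := invmx V *m W.
have hSV : S *m invmx V = U *m M1 by rewrite hS mulmxK.
have hVW : V *m W' = W by rewrite /W' mulmxA mulmxV // mul1mx.
have H1 : forall q : 'rV_m, in_lattice S (q *m S *m W').
  move=> q; exists (q *m U *m X).
  by rewrite /W' -!mulmxA (mulmxA S) hSV -mulmxA hX !mulmxA.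
have H2 : forall d : 'rV_m, exists z, in_lattice S (z *m W' - d).
  move=> d; exists (d *m Z *m V); exists (d *m R).
  rewrite -[d *m Z *m V *m W']mulmxA hVW -(mulmxA d R S) -hZ mulmxBr mulmx1.
  by rewrite mulmxA.
have H3 : in_lattice S ((v *m V) *m W') by rewrite -mulmxA hVW.
have [y hy] := key dS Spos H1 H2 H3.
exists (y *m U).
by rewrite -(mulmxK hV v) hy -(mulmxA y S) hSV mulmxA.
Qed.

Lemma colmodE k m (A : 'M[int]_(k, m)) S : isdiag S ->
  colmod A S = A - (\matrix_(i, j) (A i j %/ S j j)%Z) *m S.
Proof.
move=> dS; apply/matrixP => i j.
rewrite mxE [in RHS]mxE [in RHS]mxE mul_diagE // !mxE {2}(divz_eq (A i j) (S j j)).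
by rewrite addrC addKr.
Qed.

Lemma zm1 (V : zmodType) (A B C D : V) : A + B - C = A - C + D + (B - D).
Proof. by rewrite addrAC -!addrA; do 2 congr (_ + _); rewrite addrCA subrr addr0. Qed.
Lemma zm2 (V : zmodType) (A B C : V) : A - B = C -> A = C + B.
Proof. by move=> <-; rewrite subrK. Qed.
Lemma zm3 (V : zmodType) (A B C D : V) : A + B - D + C - B = A - D + C.
Proof. by rewrite -addrA addrAC -!addrA; congr (_ + _); rewrite (addrC C) !addrA subrr add0r. Qed.

Theorem mainTheorem5 (m l2 n : nat) (M1 : 'M[int]_m) (M2 : 'M[int]_(l2, m))
  (F : 'M[int]_(n, m)) (S W : 'M[int]_m) :
  \det M1 != 0 ->
  smith_massager M1 S W ->
  forall p : 'rV[int]_n,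
    in_relations (col_mx M1 M2) F p <->
    in_relations (col_mx S (colmod (M2 *m W) S)) (colmod (F *m W) S) p.
Proof.
move=> dM [[[dS [Sge _]] [U [V [hU [hV hS]]]]] [hMW [Z hZ]]] p.
have Sne : forall j, 0 < S j j.
  have unz (A : 'M[int]_m) : A \in unitmx -> \det A != 0.
    by rewrite unitmxE => hA; apply/eqP => h; move: hA; rewrite h unitr0.
  have dSn : \det S != 0 by rewrite hS !det_mulmx !mulf_neq0 // unz.
  have Sdiag : S = diag_mx (\row_j S j j).
    apply/matrixP => i j; rewrite !mxE.
    case: (eqVneq i j) => [->|ij]; first by rewrite ?eqxx ?mulr1n.
    by rewrite mulr0n dS.
  have : \prod_j (\row_j S j j) ord0 j != 0 by rewrite -det_diag -Sdiag.
  move=> /prodf_neq0 H j.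
  by rewrite lt_def Sge andbT; have := H j isT; rewrite !mxE.
have [X hX] := latMx hMW; rewrite subr0 in hX.
have [R hR] := latMx hZ.
have kk := key2 dS Sne hV hS hX hR.
rewrite /in_relations /in_lattice !colmodE //.
set QF := \matrix_(i, j) _.
set Q2 := \matrix_(i, j) _.
split.
- case=> x hx; rewrite -(hsubmxK x) mul_row_col in hx.
  exists (row_mx (lsubmx x *m X - p *m QF + rsubmx x *m Q2) (rsubmx x)).
  rewrite mul_row_col mulmxBr mulmxA hx.
  by rewrite !mulmxDl mulNmx mulmxBr -!mulmxA hX; exact: zm1.
- case=> y hy; rewrite -(hsubmxK y) mul_row_col mulmxBr in hy.
  have e := zm2 hy.
  have : in_lattice S ((p *m F - rsubmx y *m M2) *m W).
    exists (lsubmx y - rsubmx y *m Q2 + p *m QF).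
    rewrite mulmxDl mulNmx -mulmxA e !mulmxDl mulNmx -!mulmxA mulmxBr addrA.
    exact: zm3.
  move=> /kk [z hz]; exists (row_mx z (rsubmx y)).
  by rewrite mul_row_col -hz subrK.
Qed.
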